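(* Let $n\ge1$ and $R=\mathbb{C}[x_{ij}:1\le i<j\le n+1]$. Let $X$ be the strictly upper triangular $(n+1)\times(n+1)$ matrix with $(i,j)$-entry $x_{ij}$ for $i<j$ and $0$ otherwise. Then the set of $2\times2$ minors of $X$ is a Gröbner basis of the ideal it generates with respect to the degree reverse lexicographic order induced by any total order of the variables.
   Context: Degree revlex order (for variables ordered $x_1>\dots>x_N$): $x^a>x^b$ if $\sum a_i>\sum b_i$, or the degrees are equal and the rightmost nonzero entry of $a-b$ is negative. *)

(* Defs.v *)
From mathcomp Require Import all_boot all_order all_algebra all_fingroup.
From mathcomp Require Import Rstruct.
From mathcomp Require Import complex.
From mathcomp.multinomials Require Import mpoly.
From Stdlib Require Reals.

Set Implicit Arguments.
Unset Strict Implicit.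
Unset Printing Implicit Defensive.

Import Order.TTheory GRing.Theory Num.Theory.
Local Open Scope ring_scope.

Definition Cfield : fieldType := complex Reals.Rdefinitions.R.

(** Degree reverse lexicographic order on monomials in N variables, for the
    variable order  x_(s 0) > x_(s 1) > ... > x_(s (N-1)), where the
    permutation s encodes an arbitrary total order of the variables.
    [drl_lt s a b] means  x^a < x^b  : either deg a < deg b, or the degrees are
    equal and the rightmost (w.r.t. the variable order) nonzero entry of
    b - a is negative. *)
Definition drl_lt (N : nat) (s : {perm 'I_N}) (a b : 'X_{1..N}) : Prop :=
  (mdeg a < mdeg b)%N \/
  (mdeg a = mdeg b /\
   exists k : 'I_N, (b (s k) < a (s k))%N /\
     forall l : 'I_N, (k < l)%N -> a (s l) = b (s l)).

Definition is_lead_mon (K : fieldType) (N : nat) (s : {perm 'I_N})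
    (f : {mpoly K[N]}) (m : 'X_{1..N}) : Prop :=
  m \in msupp f /\ forall m', m' \in msupp f -> m' != m -> drl_lt s m' m.

Definition ideal_gen (K : fieldType) (N : nat) (G : {mpoly K[N]} -> Prop)
    (f : {mpoly K[N]}) : Prop :=
  exists q : seq ({mpoly K[N]} * {mpoly K[N]}),
    (forall c, c \in q -> G c.2) /\ f = \sum_(c <- q) c.1 * c.2.

Definition groebner_basis (K : fieldType) (N : nat) (s : {perm 'I_N})
    (G I : {mpoly K[N]} -> Prop) : Prop :=
  (forall g, G g -> I g) /\
  forall f, I f -> f != 0 ->
    exists g mf mg, [/\ G g, is_lead_mon s f mf, is_lead_mon s g mg
                      & (mg <= mf)%MM].

(** Variables x_ij, 1 <= i < j <= n+1 (0-based: i < j in 'I_n.+1). *)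
Definition VarIdx (n : nat) := {p : 'I_n.+1 * 'I_n.+1 | (p.1 < p.2)%N}.
Definition nvars (n : nat) : nat := #|{: VarIdx n}|.

Definition Rpoly (n : nat) := {mpoly Cfield[nvars n]}.

Definition xvar (n : nat) (p : VarIdx n) : Rpoly n := 'X_(enum_rank p).

Definition Xent (n : nat) (i j : 'I_n.+1) : Rpoly n :=
  if insub (i, j) is Some p then xvar p else 0.

Definition minor2 (n : nat) (i1 i2 j1 j2 : 'I_n.+1) : Rpoly n :=
  Xent i1 j1 * Xent i2 j2 - Xent i1 j2 * Xent i2 j1.

Definition is_minor2 (n : nat) (g : Rpoly n) : Prop :=
  exists i1 i2 j1 j2 : 'I_n.+1,
    [/\ (i1 < i2)%N, (j1 < j2)%N & g = minor2 i1 i2 j1 j2].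

(* Main.v *)
Require Import Defs.
From mathcomp Require Import all_boot all_order all_algebra all_fingroup.
From mathcomp.multinomials Require Import mpoly.
Set Implicit Arguments.
Unset Strict Implicit.
Unset Printing Implicit Defensive.
Import Order.TTheory GRing.Theory Num.Theory.
Local Open Scope ring_scope.

Definition vl n (k : 'I_(nvars n)) : 'I_n.+1 := (val (enum_val k)).1.
Definition vr n (k : 'I_(nvars n)) : 'I_n.+1 := (val (enum_val k)).2.

Lemma vlr_lt n (k : 'I_(nvars n)) : (vl k < vr k)%N.
Proof. exact: (valP (enum_val k)). Qed.

Lemma v_inj n (k k' : 'I_(nvars n)) : vl k = vl k' -> vr k = vr k' -> k = k'.
Proof.
rewrite /vl /vr => h1 h2; apply: enum_val_inj; apply: val_inj.
by move: h1 h2; case: (val (enum_val k)) => a b; case: (val (enum_val k')) => c d /= -> ->.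
Qed.

Lemma var_ex n (i j : 'I_n.+1) : (i < j)%N -> exists k : 'I_(nvars n), vl k = i /\ vr k = j.
Proof.
move=> h; exists (enum_rank (exist (fun p : 'I_n.+1 * 'I_n.+1 => (p.1 < p.2)%N) (i, j) h)).
by rewrite /vl /vr enum_rankK.
Qed.

Lemma Xent_var n (k : 'I_(nvars n)) : Xent (vl k) (vr k) = 'X_k.
Proof.
rewrite /Xent.
have -> : insub (vl k, vr k) = Some (enum_val k) :> option (VarIdx n).
  by rewrite /vl /vr -surjective_pairing valK.
by rewrite /xvar enum_valK.
Qed.

Lemma Xent_varE n (k : 'I_(nvars n)) i j : vl k = i -> vr k = j -> Xent i j = 'X_k.
Proof. by move=> <- <-; apply: Xent_var. Qed.

Lemma Xent0 n (i j : 'I_n.+1) : ~~ (i < j)%N -> Xent i j = 0.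
Proof. by move=> h; rewrite /Xent insubN. Qed.


Definition MM n := (n.+1 + n.+1)%N.
Definition Wp n (i j : 'I_n.+1) : 'X_{1..MM n} :=
  (U_(lshift n.+1 i) + U_(rshift n.+1 j))%MM.
Definition Wv n (k : 'I_(nvars n)) := Wp (vl k) (vr k).
Definition gpsi n (k : 'I_(nvars n)) : {mpoly Cfield[MM n]} := 'X_[Wv k].
Definition psi n (p : Rpoly n) : {mpoly Cfield[MM n]} :=
  mmap (@mpolyC _ Cfield) (@gpsi n) p.
Definition EE n (m : 'X_{1..nvars n}) : 'X_{1..MM n} :=
  (\sum_(k < nvars n) (Wv k *+ m k))%MM.

Lemma psiM n (p q : Rpoly n) : psi (p * q) = psi p * psi q.
Proof. by rewrite /psi rmorphM. Qed.

Lemma psiB n (p q : Rpoly n) : psi (p - q) = psi p - psi q.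
Proof. by rewrite /psi rmorphB. Qed.

Lemma psi_sum n (I : Type) (r : seq I) (F : I -> Rpoly n) :
  psi (\sum_(i <- r) F i) = \sum_(i <- r) psi (F i).
Proof. by rewrite /psi rmorph_sum. Qed.

Lemma psiX n (m : 'X_{1..nvars n}) : psi 'X_[m] = 'X_[EE m].
Proof. by rewrite /psi mmapX /mmap1 /gpsi mprodXnE. Qed.

Lemma psiXk n (k : 'I_(nvars n)) : psi 'X_k = 'X_[Wv k].
Proof. by rewrite /psi mmapX mmap1U. Qed.

Lemma psi_coef n (f : Rpoly n) K :
  (psi f)@_K = \sum_(m <- msupp f) f@_m * (EE m == K)%:R.
Proof.
rewrite {1}(mpolyE f) psi_sum raddf_sum; apply: eq_bigr => m _.
rewrite /psi mmapZ mmapX /mmap1 /gpsi mprodXnE; rewrite [LHS](mcoeffCM (f@_m) _ K) mcoeffX. done.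
Qed.

Lemma EE_l n (m : 'X_{1..nvars n}) i :
  EE m (lshift n.+1 i) = (\sum_(k < nvars n | vl k == i) m k)%N.
Proof.
rewrite /EE mnm_sumE [RHS]big_mkcond /=; apply: eq_bigr => k _.
rewrite mulmnE /Wv /Wp mnmDE !mnm1E eq_lshift eq_rlshift addn0.
by case: (vl k == i); rewrite ?mul1n ?mul0n.
Qed.

Lemma EE_r n (m : 'X_{1..nvars n}) j :
  EE m (rshift n.+1 j) = (\sum_(k < nvars n | vr k == j) m k)%N.
Proof.
rewrite /EE mnm_sumE [RHS]big_mkcond /=; apply: eq_bigr => k _.
rewrite mulmnE /Wv /Wp mnmDE !mnm1E eq_rshift eq_lrshift add0n.
by case: (vr k == j); rewrite ?mul1n ?mul0n.
Qed.

Lemma mdegEE n (m : 'X_{1..nvars n}) : mdeg (EE m) = (2 * mdeg m)%N.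
Proof.
rewrite /EE mdeg_sum mdegE big_distrr /=; apply: eq_bigr => k _.
by rewrite mdegMn /Wv /Wp mdegD !mdeg1 mulnC.
Qed.


Definition alive n (K : 'X_{1..MM n}) := forall i j : 'I_n.+1,
  (0 < K (lshift n.+1 i))%N -> (0 < K (rshift n.+1 j))%N -> (i < j)%N.

Lemma psiXent n (i j : 'I_n.+1) : (i < j)%N -> psi (Xent i j) = 'X_[Wp i j].
Proof.
by move=> /var_ex [k [hi hj]]; rewrite (Xent_varE hi hj) psiXk /Wv hi hj.
Qed.

Lemma psiXent0 n (i j : 'I_n.+1) : ~~ (i < j)%N -> psi (Xent i j) = 0.
Proof. by move=> h; rewrite Xent0 // /psi raddf0. Qed.

Lemma coefMX0 N (q : {mpoly Cfield[N]}) (u K : 'X_{1..N}) x : (K x < u x)%N -> (q * 'X_[u])@_K = 0.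
Proof.
move=> hx; apply: memN_msupp_eq0; apply/negP => H.
move: H; rewrite (perm_mem (msuppMX q u)) => /mapP [m' _ E].
by move: hx; rewrite E mnmDE ltnNge leq_addr.
Qed.

Lemma Wp_l n (i j : 'I_n.+1) : (0 < Wp i j (lshift n.+1 i))%N.
Proof. by rewrite /Wp mnmDE mnm1E eqxx. Qed.

Lemma Wp_r n (i j : 'I_n.+1) : (0 < Wp i j (rshift n.+1 j))%N.
Proof. by rewrite /Wp mnmDE !mnm1E eq_lrshift eqxx. Qed.

Lemma psi_minor_coef n (p : Rpoly n) (i1 i2 j1 j2 : 'I_n.+1) K :
  alive K -> (i1 < i2)%N -> (j1 < j2)%N ->
  (psi p * psi (minor2 i1 i2 j1 j2))@_K = 0.
Proof.
move=> hK h12 hj12; rewrite /minor2 psiB !psiM.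
case: (ltnP i2 j1) => h.
  have a1 : (i1 < j1)%N by apply: ltn_trans h.
  have a2 : (i2 < j2)%N by apply: ltn_trans hj12.
  have a3 : (i1 < j2)%N by apply: ltn_trans a2.
  rewrite (psiXent a1) (psiXent a2) (psiXent a3) (psiXent h) -!mpolyXD.
  have -> : (Wp i1 j1 + Wp i2 j2 = Wp i1 j2 + Wp i2 j1)%MM.
    apply/mnmP => x; rewrite /Wp !mnmDE.
    move: (U_(lshift n.+1 i1)%MM x) (U_(rshift n.+1 j1)%MM x) (U_(lshift n.+1 i2)%MM x) (U_(rshift n.+1 j2)%MM x) => a b c d.
    by rewrite addnACA [RHS]addnACA (addnC b d).
  by rewrite subrr (mulr0 (psi p)) mcoeff0.
have nh : ~~ (i2 < j1)%N by rewrite -leqNgt.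
have E4 := psiXent0 nh.
have HX : forall (P : {mpoly Cfield[MM n]}) u, (P * 'X_[u])@_K = 0 ->
   (P * psi (Xent i1 j1) * psi (Xent i2 j2))@_K = 0 \/ True.
  by move=> *; right.
have T : forall (P A B C D : {mpoly Cfield[MM n]}), D = 0 ->
   (P * (A * B - C * D)) = P * (A * B).
  by move=> P A B C D ->; rewrite mulr0 subr0.
rewrite (T _ _ _ _ _ E4).
case: (boolP (i1 < j1)%N) => a1; last first.
  rewrite (psiXent0 a1); move: (psi p) (psi (Xent i2 j2)) => P B.
  by rewrite [0 * B]mul0r [P * 0]mulr0 mcoeff0.
case: (boolP (i2 < j2)%N) => a2; last first.
  rewrite (psiXent0 a2); move: (psi p) (psi (Xent i1 j1)) => P A.
  by rewrite [A * 0]mulr0 [P * 0]mulr0 mcoeff0.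
rewrite (psiXent a1) (psiXent a2) -mpolyXD.
case: (posnP (K (lshift n.+1 i2))) => H1.
  apply: (@coefMX0 _ _ _ _ (lshift n.+1 i2)); rewrite H1 mnmDE.
  exact: (leq_trans (Wp_l _ _) (leq_addl _ _)).
case: (posnP (K (rshift n.+1 j1))) => H2.
  apply: (@coefMX0 _ _ _ _ (rshift n.+1 j1)); rewrite H2 mnmDE.
  exact: (leq_trans (Wp_r _ _) (leq_addr _ _)).
by move: (hK _ _ H1 H2); rewrite ltnNge h.
Qed.

Lemma ideal_coef n (f : Rpoly n) K : alive K -> ideal_gen (@is_minor2 n) f ->
  (psi f)@_K = 0.
Proof.
move=> hK [q [hq ->]]; rewrite psi_sum raddf_sum big_seq big1 // => c /hq.
move=> [i1 [i2 [j1 [j2 [h1 h2 ->]]]]]; rewrite psiM.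
exact: psi_minor_coef.
Qed.


Lemma drl_asym N (s : {perm 'I_N}) a b : drl_lt s a b -> drl_lt s b a -> False.
Proof.
case=> [h1|[e1 [k1 [h1 H1]]]] [h2|[e2 [k2 [h2 H2]]]].
- by move: (ltn_trans h1 h2); rewrite ltnn.
- by move: h1; rewrite e2 ltnn.
- by move: h2; rewrite e1 ltnn.
case: (ltngtP k1 k2) => hk.
- by move: h2; rewrite H1 // ltnn.
- by move: h1; rewrite H2 // ltnn.
- by have e : k1 = k2 := val_inj hk; subst k2; move: (ltn_trans h1 h2); rewrite ltnn.
Qed.

Lemma drl_trans N (s : {perm 'I_N}) a b c :
  drl_lt s a b -> drl_lt s b c -> drl_lt s a c.
Proof.
case=> [h1|[e1 [k1 [h1 H1]]]] [h2|[e2 [k2 [h2 H2]]]].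
- by left; apply: ltn_trans h2.
- by left; rewrite -e2.
- by left; rewrite e1.
right; split; first by rewrite e1.
case: (ltngtP k1 k2) => hk.
- exists k2; split; first by rewrite H1.
  move=> l hl; rewrite H1 ?H2 //; exact: ltn_trans hl.
- exists k1; split; first by rewrite -H2.
  move=> l hl; rewrite H1 ?H2 //; exact: ltn_trans hl.
- have e : k1 = k2 := val_inj hk; subst k2; exists k1; split; first by apply: ltn_trans h1.
  by move=> l hl; rewrite H1 // H2.
Qed.

Lemma drl_total N (s : {perm 'I_N}) (a b : 'X_{1..N}) :
  a != b -> drl_lt s a b \/ drl_lt s b a.
Proof.
move=> ne.
case: (ltngtP (mdeg a) (mdeg b)) => hd; [by left; left | by right; left|].
have [i hi] : exists i, a i != b i.
  apply/existsP; apply: contraR ne => /existsPn H.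
  by apply/eqP/mnmP => i; apply/eqP; move: (H i); rewrite negbK.
have P0 : a (s (s^-1 i)%g) != b (s (s^-1 i)%g) by rewrite permKV.
case: (@arg_maxnP _ (s^-1 i)%g (fun u => a (s u) != b (s u)) (fun u => nat_of_ord u) P0).
move=> t Pt Hmax.
have Hab : forall l : 'I_N, (t < l)%N -> a (s l) = b (s l).
  move=> l hl; apply/eqP; apply: contraTT hl => Pl.
  by rewrite -leqNgt; apply: Hmax.
case: (ltngtP (a (s t)) (b (s t))) => h.
- right; right; split=> //; exists t; split=> // l hl; by rewrite Hab.
- left; right; split=> //; exists t; split=> // l hl; by rewrite Hab.
- by move: Pt; rewrite h eqxx.
Qed.

Lemma lead_seq N (s : {perm 'I_N}) (r : seq 'X_{1..N}) : r != [::] ->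
  exists2 m, m \in r & forall m', m' \in r -> m' != m -> drl_lt s m' m.
Proof.
elim: r => // x r IH _.
case: (eqVneq r [::]) => [->|nr].
  by exists x; rewrite ?mem_seq1 // => m'; rewrite mem_seq1 => ->.
case: (IH nr) => m hm Hm.
case: (eqVneq x m) => [exm|nxm].
  exists m; first by rewrite inE hm orbT.
  by move=> m'; rewrite inE => /orP [/eqP ->|]; [rewrite exm eqxx|apply: Hm].
case: (drl_total s nxm) => h.
  exists m; first by rewrite inE hm orbT.
  by move=> m'; rewrite inE => /orP [/eqP -> _|]; [|apply: Hm].
exists x; first by rewrite inE eqxx.
move=> m'; rewrite inE => /orP [/eqP ->|hm']; first by rewrite eqxx.
move=> nx; case: (eqVneq m' m) => [->//|nm].
by apply: drl_trans (Hm _ hm' nm) h.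
Qed.

Lemma lead_ex (K : fieldType) N (s : {perm 'I_N}) (f : {mpoly K[N]}) :
  f != 0 -> exists m, is_lead_mon s f m.
Proof.
move=> nf; have : msupp f != [::] by rewrite msupp_eq0.
by case/(lead_seq s) => m hm Hm; exists m; split.
Qed.


Lemma split3 N (G : 'I_N -> nat) (t : 'I_N) :
  (\sum_(u : 'I_N) G u = \sum_(u : 'I_N | (u < t)%N) G u + G t + \sum_(u : 'I_N | (t < u)%N) G u)%N.
Proof.
rewrite (bigD1 t) //= (bigID (fun u : 'I_N => (u < t)%N)) /=.
rewrite addnA [(G t + _)%N]addnC; congr (_ + _)%N; first congr (_ + _)%N.
  apply: eq_bigl => u; case: (ltngtP u t) => h //=.
  - by rewrite andbT; apply/negP => /eqP e; move: h; rewrite e ltnn.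
  - by rewrite andbF.
  - by have e : u = t := val_inj h; rewrite e eqxx.
apply: eq_bigl => u; case: (ltngtP u t) => h //=.
- by rewrite andbF.
- by rewrite andbT; apply/negP => /eqP e; move: h; rewrite e ltnn.
- by have e : u = t := val_inj h; rewrite e eqxx.
Qed.

Lemma pos_sum_ex (I : finType) (P : pred I) (F : I -> nat) :
  (0 < \sum_(k | P k) F k)%N -> exists k, P k /\ (0 < F k)%N.
Proof.
move=> h; case: (boolP [exists k, P k && (0 < F k)%N]) => [/existsP [k /andP [a b]]|/existsPn H].
  by exists k.
exfalso; move: h; rewrite big1 ?ltnn // => k Pk; move: (H k); rewrite Pk /=.
by rewrite lt0n negbK => /eqP.
Qed.

Lemma pos_sum (I : finType) (P : pred I) (F : I -> nat) k :
  P k -> (0 < F k)%N -> (0 < \sum_(k | P k) F k)%N.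
Proof.
by move=> Pk h; rewrite (bigD1 k) //=; apply: leq_trans h (leq_addr _ _).
Qed.

Lemma count_ex N (T : eqType) (s : {perm 'I_N}) (side : 'I_N -> T)
    (m m' : 'X_{1..N}) (t : 'I_N) :
  (\sum_(k | side k == side (s t)) m k = \sum_(k | side k == side (s t)) m' k)%N ->
  (m (s t) < m' (s t))%N ->
  (forall u : 'I_N, (t < u)%N -> m' (s u) = m (s u)) ->
  exists k, [/\ side k = side (s t), (0 < m k)%N & ((s^-1)%g k < t)%N].
Proof.
move=> Hs hlt Hu.
case: (boolP [exists k, [&& side k == side (s t), (0 < m k)%N & ((s^-1)%g k < t)%N]]).
  by move=> /existsP [k /and3P [/eqP a b c]]; exists k.
move=> /existsPn H; exfalso.
have R : forall mm : 'X_{1..N}, (\sum_(k | side k == side (s t)) mm k =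
   \sum_(u : 'I_N) (if side (s u) == side (s t) then mm (s u) else 0))%N.
  move=> mm; rewrite big_mkcond /= (reindex_inj (@perm_inj _ s)) /=.
  by apply: eq_bigr.
move: Hs; rewrite !R !(split3 _ t) eqxx.
have -> : (\sum_(u : 'I_N | (u < t)%N) (if side (s u) == side (s t) then m (s u) else 0) = 0)%N.
  apply: big1 => u hu; case: ifP => // e; move: (H (s u)); rewrite e permK hu /=.
  by rewrite andbT lt0n negbK => /eqP.
have -> : (\sum_(u : 'I_N | (t < u)%N) (if side (s u) == side (s t) then m (s u) else 0) =
           \sum_(u : 'I_N | (t < u)%N) (if side (s u) == side (s t) then m' (s u) else 0))%N.
  by apply: eq_bigr => u hu; rewrite Hu.
move=> e; have : (0 + m (s t) < \sum_(u : 'I_N | (u < t)%N) (if side (s u) == side (s t) then m' (s u) else 0) + m' (s t))%N.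
  by rewrite add0n; apply: leq_trans hlt (leq_addl _ _).
by rewrite -(ltn_add2r (\sum_(u : 'I_N | (t < u)%N) (if side (s u) == side (s t) then m' (s u) else 0))) e ltnn.
Qed.

Lemma le_pairU N (m : 'X_{1..N}) (k1 k2 : 'I_N) :
  k1 != k2 -> (0 < m k1)%N -> (0 < m k2)%N -> (U_(k1) + U_(k2) <= m)%MM.
Proof.
move=> ne h1 h2; apply/mnm_lepP => x; rewrite mnmDE !mnm1E.
case: (eqVneq k1 x) => [e1|n1]; case: (eqVneq k2 x) => [e2|n2].
- by move: ne; rewrite e1 e2 eqxx.
- by subst x; exact: h1.
- by subst x; exact: h2.
- by [].
Qed.

Lemma drl_swap N (s : {perm 'I_N}) (a b c d : 'I_N) (T : 'I_N) :
  c != d -> (s T == c) || (s T == d) -> s T != a -> s T != b ->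
  ((s^-1)%g a <= T)%N -> ((s^-1)%g b <= T)%N -> ((s^-1)%g c <= T)%N -> ((s^-1)%g d <= T)%N ->
  drl_lt s (U_(c) + U_(d))%MM (U_(a) + U_(b))%MM.
Proof.
move=> ncd hT na nb pa pb pc pd; right; split; first by rewrite !mdegD !mdeg1.
exists T; split.
  rewrite !mnmDE !mnm1E eq_sym (negbTE na) eq_sym (negbTE nb) /=.
  by case/orP: hT => /eqP <-; rewrite eqxx // addn1.
move=> l hl; rewrite !mnmDE !mnm1E.
have F : forall x, ((s^-1)%g x <= T)%N -> (x == s l) = false.
  move=> x hx; apply/negP => /eqP e; move: hx; rewrite e permK leqNgt hl //.
by rewrite !F.
Qed.

Lemma msuppXB (K : fieldType) N (P Q : 'X_{1..N}) m : P != Q ->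
  (m \in msupp ('X_[P] - 'X_[Q] : {mpoly K[N]})) = (m == P) || (m == Q).
Proof.
move=> ne; rewrite mcoeff_msupp mcoeffB !mcoeffX.
case: (eqVneq m P) => [->|nP].
  by rewrite [Q == P]eq_sym (negbTE ne) /= subr0 oner_neq0.
case: (eqVneq m Q) => [e|nQ] /=.
  by subst m; rewrite sub0r oppr_eq0 oner_neq0.
by rewrite subrr eqxx.
Qed.

Lemma lead_binom (K : fieldType) N (s : {perm 'I_N}) (P Q : 'X_{1..N}) :
  drl_lt s Q P ->
  is_lead_mon s ('X_[P] - 'X_[Q] : {mpoly K[N]}) P /\
  is_lead_mon s ('X_[Q] - 'X_[P] : {mpoly K[N]}) P.
Proof.
move=> h; have ne : P != Q.
  by apply/negP => /eqP e; move: h; rewrite e => h; apply: (drl_asym h h).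
split; split.
- by rewrite msuppXB // eqxx.
- move=> m'; rewrite msuppXB // => /orP [/eqP e|/eqP e]; subst m' => //.
  by rewrite eqxx.
- by rewrite msuppXB 1?eq_sym // eqxx orbT.
- move=> m'; rewrite msuppXB 1?eq_sym // => /orP [/eqP e|/eqP e]; subst m' => //.
  by rewrite eqxx.
Qed.

Lemma minor_X n (i1 i2 j1 j2 : 'I_n.+1) (a b c d : 'I_(nvars n)) :
  vl a = i1 -> vr a = j1 -> vl b = i2 -> vr b = j2 ->
  vl c = i1 -> vr c = j2 -> vl d = i2 -> vr d = j1 ->
  minor2 i1 i2 j1 j2 = 'X_[U_(a) + U_(b)] - 'X_[U_(c) + U_(d)].
Proof.
move=> a1 a2 b1 b2 c1 c2 d1 d2.
by rewrite /minor2 (Xent_varE a1 a2) (Xent_varE b1 b2) (Xent_varE c1 c2) (Xent_varE d1 d2) -!mpolyXD.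
Qed.

Lemma rsub0 (R : ringType) (A B C : R) : A * B - C * 0 = A * B.
Proof. by rewrite mulr0 subr0. Qed.

Lemma minor_chain n (i1 i2 j1 j2 : 'I_n.+1) (a b : 'I_(nvars n)) :
  vl a = i1 -> vr a = j1 -> vl b = i2 -> vr b = j2 -> ~~ (i2 < j1)%N ->
  minor2 i1 i2 j1 j2 = 'X_[U_(a) + U_(b)].
Proof.
move=> a1 a2 b1 b2 h.
by rewrite /minor2 (Xent0 h) rsub0 (Xent_varE a1 a2) (Xent_varE b1 b2) -mpolyXD.
Qed.


Theorem corollary6p5 (n : nat) (hn : (1 <= n)%N) (s : {perm 'I_(nvars n)}) :
  groebner_basis s (@is_minor2 n) (ideal_gen (@is_minor2 n)).
Proof.
split.
  move=> g hg; exists [:: (1, g)]; split.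
    by move=> c; rewrite mem_seq1 => /eqP ->.
  by rewrite big_seq1 mul1r.
move=> f hf nf.
have [mf [hmf Hmf]] := lead_ex s nf.
pose K := EE mf.
case: (boolP [forall i : 'I_n.+1, forall j : 'I_n.+1,
   (0 < K (lshift n.+1 i))%N ==> (0 < K (rshift n.+1 j))%N ==> (i < j)%N]) => al;
   last first.
  move: al => /forallPn [i /forallPn [j]]; rewrite !negb_imply => /andP [Hi /andP [Hj Hij]].
  move: Hi; rewrite /K EE_l => /pos_sum_ex [k1 [/eqP e1 p1]].
  move: Hj; rewrite EE_r => /pos_sum_ex [k2 [/eqP e2 p2]].
  have a_lt : (vl k2 < i)%N.
    by apply: (leq_trans (vlr_lt k2)); rewrite e2 leqNgt.
  have j_lt : (j < vr k1)%N.
    by apply: (leq_ltn_trans _ (vlr_lt k1)); rewrite e1 leqNgt.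
  have E := minor_chain (erefl (vl k2)) e2 e1 (erefl (vr k1)) Hij.
  exists (minor2 (vl k2) i j (vr k1)), mf, (U_(k2) + U_(k1))%MM; split.
  - by exists (vl k2), i, j, (vr k1); split.
  - by split.
  - rewrite E; split; first by rewrite msuppX mem_seq1.
    by move=> m'; rewrite msuppX mem_seq1 => /eqP e; subst m'; rewrite eqxx.
  - have nk : k2 != k1 by apply/eqP => e; move: a_lt; rewrite e e1 ltnn.
    exact: (le_pairU nk p2 p1).
have hK : alive K.
  by move=> i j Hi Hj; move: (forallP (forallP al i) j); rewrite Hi Hj.
have Z := ideal_coef hK hf.
rewrite psi_coef in Z.
have [m' [hm' nm' Em']] : exists m', [/\ m' \in msupp f, m' != mf & EE m' = K].
  case: (boolP (has (fun m' => (m' != mf) && (EE m' == K)) (msupp f))).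
    by move=> /hasP [m' hm' /andP [a /eqP b]]; exists m'.
  move=> /hasPn H; exfalso; move: Z.
  have S0 : \sum_(i <- msupp f | i != mf) f@_i * (EE i == K)%:R = 0.
    rewrite big_seq_cond; apply: big1 => m /andP [hm nm].
    move: (H m hm); rewrite nm /= => /negbTE ->.
    by rewrite /= mulr0.
  rewrite (bigD1_seq mf) ?msupp_uniq //= S0.
  rewrite /K eqxx /= mulr1 addr0 => e.
  by move: hmf; rewrite mcoeff_msupp e eqxx.
have dm : mdeg m' = mdeg mf.
  by have := mdegEE m'; rewrite Em' /K mdegEE => /eqP; rewrite eqn_pmul2l // => /eqP.
case: (Hmf m' hm' nm') => [hd|[_ [t [ht Ht]]]].
  by move: hd; rewrite dm ltnn.
have c1 : (\sum_(k | vl k == vl (s t)) mf k = \sum_(k | vl k == vl (s t)) m' k)%N.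
  by rewrite -!EE_l Em'.
have c2 : (\sum_(k | vr k == vr (s t)) mf k = \sum_(k | vr k == vr (s t)) m' k)%N.
  by rewrite -!EE_r Em'.
have [k1 [e1 p1 q1]] := @count_ex _ _ s (@vl n) mf m' t c1 ht Ht.
have [k2 [e2 p2 q2]] := @count_ex _ _ s (@vr n) mf m' t c2 ht Ht.
have nk1v : k1 != s t by apply/eqP => e; move: q1; rewrite e permK ltnn.
have nk2v : k2 != s t by apply/eqP => e; move: q2; rewrite e permK ltnn.
have r1 : vr k1 != vr (s t).
  by apply/eqP => e; apply: (negP nk1v); apply/eqP; exact: v_inj e1 e.
have l2 : vl k2 != vl (s t).
  by apply/eqP => e; apply: (negP nk2v); apply/eqP; exact: v_inj e e2.
have alive_pq : (vl k2 < vr k1)%N.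
  apply: hK.
    by rewrite /K EE_l; apply: (@pos_sum _ _ _ k2).
  by rewrite /K EE_r; apply: (@pos_sum _ _ _ k1).
have [w [wl wr]] := var_ex alive_pq.
have ntw : s t != w by apply/eqP => e; move: l2; rewrite -wl -e eqxx.
have nwk1 : w != k1 by apply/eqP => e; move: l2; rewrite -wl e e1 eqxx.
have nwk2 : w != k2 by apply/eqP => e; move: r1; rewrite -wr e e2 eqxx.
have nk12 : k1 != k2 by apply/eqP => e; move: l2; rewrite -e e1 eqxx.
have hsw : drl_lt s (U_(s t) + U_(w))%MM (U_(k1) + U_(k2))%MM.
  case: (ltnP t (s^-1 w)%g) => hw.
  - apply: (@drl_swap _ _ _ _ _ _ (s^-1 w)%g) => //.
    + by rewrite permKV eqxx orbT.
    + by rewrite permKV.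
    + by rewrite permKV.
    + exact: ltnW (ltn_trans q1 hw).
    + exact: ltnW (ltn_trans q2 hw).
    + by rewrite permK ltnW.
  - apply: (@drl_swap _ _ _ _ _ _ t) => //.
    + by rewrite eqxx.
    + by rewrite eq_sym.
    + by rewrite eq_sym.
    + exact: ltnW.
    + exact: ltnW.
    + by rewrite permK.
have hle : (U_(k1) + U_(k2) <= mf)%MM by apply: le_pairU.
have LB := @lead_binom Cfield _ s _ _ hsw.
have l2' : (vl k2 : nat) != vl (s t) by [].
have r1' : (vr k1 : nat) != vr (s t) by [].
case: (ltnP (vl (s t)) (vl k2)) => ha.
- case: (ltnP (vr (s t)) (vr k1)) => hb.
  + exists (minor2 (vl (s t)) (vl k2) (vr (s t)) (vr k1)), mf, (U_(k1) + U_(k2))%MM.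
    split => //; last first.
      rewrite (minor_X (a := s t) (b := w) (c := k1) (d := k2)) //.
      exact: LB.2.
    by exists (vl (s t)), (vl k2), (vr (s t)), (vr k1); split.
  + have {}hb : (vr k1 < vr (s t))%N by rewrite ltn_neqAle r1' hb.
    exists (minor2 (vl (s t)) (vl k2) (vr k1) (vr (s t))), mf, (U_(k1) + U_(k2))%MM.
    split => //; last first.
      rewrite (minor_X (a := k1) (b := k2) (c := s t) (d := w)) //.
      exact: LB.1.
    by exists (vl (s t)), (vl k2), (vr k1), (vr (s t)); split.
- have {}ha : (vl k2 < vl (s t))%N by rewrite ltn_neqAle l2' ha.
  case: (ltnP (vr (s t)) (vr k1)) => hb.
  + exists (minor2 (vl k2) (vl (s t)) (vr (s t)) (vr k1)), mf, (U_(k1) + U_(k2))%MM.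
    split => //; last first.
      rewrite (minor_X (a := k2) (b := k1) (c := w) (d := s t)) //.
      rewrite [(U_(k2) + _)%MM]addmC [(U_(w) + _)%MM]addmC.
      exact: LB.1.
    by exists (vl k2), (vl (s t)), (vr (s t)), (vr k1); split.
  + have {}hb : (vr k1 < vr (s t))%N by rewrite ltn_neqAle r1' hb.
    exists (minor2 (vl k2) (vl (s t)) (vr k1) (vr (s t))), mf, (U_(k1) + U_(k2))%MM.
    split => //; last first.
      rewrite (minor_X (a := w) (b := s t) (c := k2) (d := k1)) //.
      rewrite [(U_(k2) + _)%MM]addmC [(U_(w) + _)%MM]addmC.
      exact: LB.2.
    by exists (vl k2), (vl (s t)), (vr k1), (vr (s t)); split.
Qed.
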